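(* For integers $0\le d\le r<\min\{m,n\}$ with $d\le\min\{m,n\}-r-1$, there is an isomorphism of $\mathfrak{S}_n\times\mathfrak{S}_m$-modules $R(\mathcal{Z}_{n,m,r})_d\cong R(\mathcal{Z}_{n,m,r+1})_d$.
   Context: Fix positive integers $n,m$. $\mathbb{C}[\mathbf{x}_{n\times m}]$ is the polynomial ring in variables $x_{i,j}$; $\mathfrak{S}_n\times\mathfrak{S}_m$ acts by $(g,h)\cdot x_{i,j}=x_{g(i),h(j)}$. For finite stable $\mathcal{Z}\subseteq\mathrm{Mat}_{n\times m}(\mathbb{C})$, $R(\mathcal{Z})=\mathbb{C}[\mathbf{x}_{n\times m}]/\mathrm{gr}\,\mathbf{I}(\mathcal{Z})$, where $\mathbf{I}(\mathcal{Z})$ is the vanishing ideal and $\mathrm{gr}\,\mathbf{I}(\mathcal{Z})$ the ideal generated by top-degree homogeneous components of its nonzero elements; $R(\mathcal{Z})_d$ is its degree-$d$ component. $\mathcal{Z}_{n,m,r}$ is the set of $n\times m$ $0/1$ matrices with exactly $r$ ones and at most one $1$ in each row and column. *)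

(* Defs.v *)
From HB Require Import structures.
From mathcomp Require Import all_boot all_algebra all_fingroup.
From mathcomp Require Import Rstruct.
From mathcomp Require Import complex.
From mathcomp.multinomials Require Import mpoly.

Set Implicit Arguments.
Unset Strict Implicit.
Unset Printing Implicit Defensive.

Import GRing.Theory.
Local Open Scope ring_scope.

Definition CC : fieldType := complex.complex Rdefinitions.R.

Definition nvar (n m : nat) : nat := #|{: 'I_n * 'I_m}|.

(* The polynomial ring C[x_{n x m}]; variables are indexed by the pairs (i,j)
   through enum_rank. *)
Definition Poly (n m : nat) := {mpoly CC[nvar n m]}.

Definition xvar (n m : nat) (i : 'I_n) (j : 'I_m) : Poly n m :=
  'X_(enum_rank (i, j)).

Definition Sact (n m : nat) (gh : {perm 'I_n} * {perm 'I_m}) (p : Poly n m)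
  : Poly n m :=
  comp_mpoly [tuple xvar (gh.1 (enum_val k).1) (gh.2 (enum_val k).2)
             | k < nvar n m] p.

Definition evalM (n m : nat) (Z : 'M[CC]_(n, m)) (p : Poly n m) : CC :=
  p.@[fun k : 'I_(nvar n m) => Z (enum_val k).1 (enum_val k).2].

Definition vanishing (n m : nat) (Z : 'M[CC]_(n, m) -> Prop) (p : Poly n m)
  : Prop :=
  forall M, Z M -> evalM M p = 0.

(* Top-degree homogeneous component of a polynomial
   (msize p = 1 + total degree of p). *)
Definition topcomp (k : nat) (p : {mpoly CC[k]}) : {mpoly CC[k]} :=
  \sum_(mo <- msupp p | mdeg mo == (msize p).-1) p@_mo *: 'X_[mo].

(* gr I(Z): the ideal generated by the top-degree components of the nonzero
   elements of I(Z); membership = being a finite combination sum a_i * t_i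
   with each t_i such a top-degree component. *)
Definition grI (n m : nat) (Z : 'M[CC]_(n, m) -> Prop) (f : Poly n m) : Prop :=
  exists s : seq (Poly n m * Poly n m),
    (forall q, q \in s ->
       exists g : Poly n m, [/\ g != 0, vanishing Z g & q.2 = topcomp g])
    /\ f = \sum_(q <- s) q.1 * q.2.

Definition Zrook (n m r : nat) (M : 'M[CC]_(n, m)) : Prop :=
  [/\ (forall i j, M i j = (0%R : CC) \/ M i j = (1%R : CC)),
      #|[set ij : 'I_n * 'I_m | M ij.1 ij.2 == (1%R : CC)]| = r,
      (forall i : 'I_n, (#|[set j : 'I_m | M i j == (1%R : CC)]| <= 1)%N) &
      (forall j : 'I_m, (#|[set i : 'I_n | M i j == (1%R : CC)]| <= 1)%N)].

(* Isomorphism of G-modules between two quotients A/(W1 /\ A) and A/(W2 /\ A)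
   of a common G-stable subspace A of an ambient K-module V (G acting on V via
   act).  An isomorphism of the quotients is given through a function psi on
   representatives: it is well defined and injective on classes, K-linear on
   classes, G-equivariant on classes and surjective on classes. *)
Definition quot_Gmod_iso (G : Type) (K : nzRingType) (V : lmodType K)
    (act : G -> V -> V) (A W1 W2 : V -> Prop) : Prop :=
  exists psi : V -> V,
    [/\ forall a, A a -> A (psi a),
        forall a b, A a -> A b -> (W1 (a - b) <-> W2 (psi a - psi b)),
        forall (c : K) a b, A a -> A b ->
          W2 (psi (c *: a + b) - (c *: psi a + psi b)),
        forall g a, A a -> W2 (psi (act g a) - act g (psi a)) &
        forall c, A c -> exists2 a, A a & W2 (psi a - c)].

(* R(Z)_d = C[x]_d / (gr I(Z))_d ; the isomorphism R(Z)_d ~= R(Z')_d of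
   S_n x S_m-modules. *)
Definition Rdeg_iso (n m d : nat) (Z1 Z2 : 'M[CC]_(n, m) -> Prop) : Prop :=
  quot_Gmod_iso (@Sact n m) (fun p : Poly n m => p \is d.-homog)
    (grI Z1) (grI Z2).

(* Main.v *)
Require Import Defs.
From HB Require Import structures.
From mathcomp Require Import all_boot all_algebra all_fingroup.
From mathcomp Require Import Rstruct complex.
From mathcomp.multinomials Require Import mpoly.
From mathcomp Require Import zify.
Set Implicit Arguments.
Unset Strict Implicit.
Unset Printing Implicit Defensive.
Import GRing.Theory Num.Theory.
Local Open Scope ring_scope.

Section Counting.
Variable (V : finType).

Lemma cnt_between (U M : {set V}) (j : nat) : U \subset M -> (#|U| <= j)%N ->
  #|[set S : {set V} | (U \subset S) && (S \subset M) && (#|S| == j)]|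
  = 'C(#|M| - #|U|, j - #|U|).
Proof.
move=> UM Uj.
have -> : [set S : {set V} | (U \subset S) && (S \subset M) && (#|S| == j)] =
  [set B :|: U | B in [set B : {set V} | B \subset M :\: U & #|B| == (j - #|U|)%N]].
  apply/setP => S; rewrite !inE; apply/idP/imsetP.
  - case/andP => /andP [US SM] /eqP Sj; exists (S :\: U).
      rewrite inE; apply/andP; split; first by apply: setSD.
      rewrite cardsD (setIidPr US) Sj //.
    by apply/setP => x; rewrite !inE; case xU: (x \in U) => /=; [rewrite (subsetP US) | rewrite orbF].
  - case=> B; rewrite inE => /andP [BM /eqP Bj] ->.
    have dBU : [disjoint B & U].
      rewrite disjoints_subset; apply: subset_trans BM _; apply/subsetP => x; rewrite !inE => /andP [] -> //.
    apply/andP; split; first (apply/andP; split).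
    + by apply/subsetP => x xU; rewrite inE xU orbT.
    + by rewrite subUset UM andbT; apply: subset_trans BM (subsetDl _ _).
    + rewrite cardsU (disjoint_setI0 dBU) cards0 subn0 Bj; apply/eqP; lia.
rewrite card_in_imset.
  rewrite cards_draws cardsD (setIidPr UM) //.
move=> B1 B2; rewrite !inE => /andP [B1M _] /andP [B2M _] E.
apply/setP => x; have := congr1 (fun X : {set V} => x \in X) E; rewrite /= !inE.
case: (boolP (x \in U)) => xU; last by rewrite !orbF.
have n1 : x \notin B1 by apply/negP => /(subsetP B1M); rewrite inE xU.
have n2 : x \notin B2 by apply/negP => /(subsetP B2M); rewrite inE xU.
by rewrite (negbTE n1) (negbTE n2).
Qed.

Variable (F : nzRingType).

Lemma double_count (M : {set V}) (j : nat) (P : pred {set V}) (a : {set V} -> F) :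
  \sum_(S : {set V} | (S \subset M) && (#|S| == j)) \sum_(U : {set V} | (U \subset S) && P U) a U
  = \sum_(U : {set V} | (U \subset M) && P U && (#|U| <= j)%N) a U *+ 'C(#|M| - #|U|, j - #|U|).
Proof.
rewrite (exchange_big_dep (fun U : {set V} => (U \subset M) && P U)) /=; last first.
  by move=> S U /andP [SM _] /andP [US ->]; rewrite (subset_trans US SM).
rewrite [RHS]big_mkcondr /=; apply: eq_bigr => U /andP [UM PU].
case: leqP => Uj.
  rewrite -(cnt_between UM Uj) -sumr_const; apply: eq_bigl => S.
  by rewrite !inE PU andbT; set a1 := (S \subset M); set a2 := (U \subset S); set a3 := (#|S| == j); case: a1; case: a2; case: a3.
rewrite big_pred0 // => S; rewrite PU andbT; apply/negP => /andP [/andP [_ /eqP Sj] US].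
by have := subset_leq_card US; rewrite Sj; lia.
Qed.

End Counting.

Section Rook.
Variables (F : fieldType).
Hypothesis Hch : forall k : nat, (k.+1)%:R != 0 :> F.
Variables (V Rr Cc : finType) (rw : V -> Rr) (cl : V -> Cc) (mk : Rr -> Cc -> V).
Hypotheses (rw_mk : forall a b, rw (mk a b) = a) (cl_mk : forall a b, cl (mk a b) = b).

Definition matching (S : {set V}) :=
  [forall x in S, forall y in S, ((rw x == rw y) || (cl x == cl y)) ==> (x == y)].

Lemma matchingP (S : {set V}) : matching S ->
  forall x y, x \in S -> y \in S -> (rw x = rw y \/ cl x = cl y) -> x = y.
Proof.
move=> /forall_inP H x y xS yS E; have /forall_inP/(_ y yS) := H x xS.
by case: E => ->; rewrite eqxx ?orbT => /eqP.
Qed.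

Lemma matchingI (S : {set V}) : (forall x y, x \in S -> y \in S -> (rw x = rw y \/ cl x = cl y) -> x = y) ->
  matching S.
Proof.
move=> H; apply/forall_inP => x xS; apply/forall_inP => y yS; apply/implyP => /orP E.
by apply/eqP; apply: H => //; case: E => /eqP; [left|right].
Qed.

Lemma matchingS (S T : {set V}) : T \subset S -> matching S -> matching T.
Proof.
move=> TS /matchingP H; apply: matchingI => x y xT yT; apply: H; exact: (subsetP TS).
Qed.

Definition board (RS : {set Rr}) (CS : {set Cc}) := [set x | (rw x \in RS) && (cl x \in CS)].

Definition Fsum (c : {set V} -> F) (M : {set V}) (j : nat) :=
  \sum_(S : {set V} | (S \subset M) && (#|S| == j)) c S.

Lemma extend_matching RS CS K (S : {set V}) : S \subset board RS CS -> matching S ->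
  (#|S| <= K)%N -> (K <= minn #|RS| #|CS|)%N ->
  exists M : {set V}, [/\ M \subset board RS CS, matching M, S \subset M & #|M| = K].
Proof.
move=> SB mS SK KB; move Et: (K - #|S|)%N => t.
elim: t S SB mS SK Et => [|t IH] S SB mS SK Et.
  by exists S; split => //; apply/eqP; rewrite eqn_leq SK /=; lia.
have lt1 : (#|rw @: S| < #|RS|)%N by have := leq_imset_card rw S; lia.
have lt2 : (#|cl @: S| < #|CS|)%N by have := leq_imset_card cl S; lia.
have [a aR] : exists a, a \in RS :\: rw @: S.
  apply/set0Pn; rewrite -card_gt0 cardsD.
  have := subset_leq_card (subsetIr RS (rw @: S)); lia.
have [b bC] : exists b, b \in CS :\: cl @: S.
  apply/set0Pn; rewrite -card_gt0 cardsD.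
  have := subset_leq_card (subsetIr CS (cl @: S)); lia.
move: aR bC; rewrite !inE => /andP [naS aR] /andP [nbS bC].
have xS : mk a b \notin S.
  by apply/negP => /(imset_f rw); rewrite rw_mk (negbTE naS).
have h1 : mk a b |: S \subset board RS CS.
  by rewrite subUset sub1set SB inE rw_mk cl_mk aR bC.
have h2 : matching (mk a b |: S).
  apply: matchingI => x y; rewrite !inE => /orP [/eqP->|xS'] /orP [/eqP->|yS'] //.
  + by rewrite rw_mk cl_mk => -[E|E]; [move: naS|move: nbS]; rewrite E imset_f.
  + by rewrite rw_mk cl_mk => -[E|E]; [move: naS|move: nbS]; rewrite -E imset_f.
  + by apply: (matchingP mS).
have h3 : (#|mk a b |: S| <= K)%N by rewrite cardsU1 xS; lia.
have h4 : (K - #|mk a b |: S|)%N = t by rewrite cardsU1 xS; lia.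
have [M [MB mM SM MK]] := IH _ h1 h2 h3 h4.
by exists M; split => //; apply: subset_trans SM; apply: subsetU1.
Qed.

Lemma Fsum_split (c : {set V} -> F) (N : {set V}) (e : V) (j : nat) : e \notin N ->
  Fsum c (e |: N) j.+1 = Fsum c N j.+1 +
     \sum_(X : {set V} | (X \subset N) && (#|X| == j)) c (e |: X).
Proof.
move=> eN; rewrite /Fsum (bigID (fun Y : {set V} => e \in Y)) /= addrC; congr (_ + _).
  apply: eq_bigl => Y; case: (boolP (e \in Y)) => eY /=.
    rewrite andbF; apply/esym/negbTE/negP => /andP [/subsetP /(_ e eY) eN'] _.
    by rewrite eN' in eN.
  rewrite andbT; congr (_ && _); apply/idP/idP => H; last by apply: subset_trans H (subsetU1 _ _).
  apply/subsetP => x xY; have := subsetP H x xY; rewrite !inE => /orP [/eqP E|//].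
  by move: eY; rewrite -E xY.
rewrite (reindex_onto (fun X => e |: X) (fun Y => Y :\ e)) /=; last first.
  by move=> Y /andP [_ eY]; rewrite setD1K.
apply: eq_bigl => X; rewrite setU11 andbT.
case: (boolP (e \in X)) => eX.
  have -> : ((e |: X) :\ e == X) = false.
    by apply/negbTE/negP => /eqP E; move: eX; rewrite -E setD11.
  rewrite andbF; apply/esym/negbTE/negP => /andP [/subsetP /(_ e eX) eN'] _.
  by rewrite eN' in eN.
rewrite (setU1K eX) eqxx andbT cardsU1 eX add1n eqSS; congr (_ && _).
apply/idP/idP => H; last by apply: setUS.
apply/subsetP => x xX; have := subsetP H x; rewrite !inE xX orbT => /(_ isT) /orP [/eqP E|//].
by move: eX; rewrite -E xX.
Qed.

Lemma johnson (c : {set V} -> F) (M : {set V}) (j : nat) :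
  (forall (T : {set V}) t u, T \subset M -> #|T| = j -> t \in T -> u \in M -> u \notin T ->
       c T = c (u |: (T :\ t))) ->
  forall S T : {set V}, S \subset M -> T \subset M -> #|S| = j -> #|T| = j -> c T = c S.
Proof.
move=> Hsw S T SM TM Sj Tj; move Et: #|T :\: S| => t.
elim: t T TM Tj Et => [|t IH] T TM Tj Et.
  move/cards0_eq/eqP: Et; rewrite setD_eq0 => TS.
  by have /eqP -> : T == S by rewrite eqEcard TS Sj Tj leqnn.
have [x xTS] : exists x, x \in T :\: S by apply/set0Pn; rewrite -card_gt0 Et.
have [y ySt] : exists y, y \in S :\: T.
  apply/set0Pn; rewrite -card_gt0 cardsD.
  have : (#|T :&: S| < #|T|)%N.
    rewrite cardsD in Et; have := subset_leq_card (subsetIl T S); lia.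
  by rewrite setIC; lia.
move: xTS ySt; rewrite !inE => /andP [xS xT] /andP [yT yS].
rewrite (Hsw T x y) //; last exact: (subsetP SM).
apply: IH.
- rewrite subUset sub1set (subsetP SM) //=; apply: subset_trans TM; apply: subD1set.
- rewrite cardsU1 !inE negb_and yT orbT /= (cardsD1 x T) xT in Tj *; lia.
- have -> : (y |: T :\ x) :\: S = (T :\: S) :\ x.
    apply/setP => z; rewrite !inE; case: (z =P y) => [->|]; rewrite ?yS ?andbF //=.
    by rewrite andbCA.
  by rewrite (cardsD1 x (T :\: S)) inE xS xT in Et; lia.
Qed.

Lemma rank_lemma (d : nat) : forall (RS : {set Rr}) (CS : {set Cc}) (K : nat) (c : {set V} -> F),
  (d <= K)%N -> (K + d <= minn #|RS| #|CS|)%N ->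
  (forall M : {set V}, M \subset board RS CS -> matching M -> #|M| = K -> Fsum c M d = 0) ->
  forall S : {set V}, S \subset board RS CS -> matching S -> #|S| = d -> c S = 0.
Proof.
elim: d => [|d IH] RS CS K c dK KB Hv S SB mS Sd.
  have S0 : S = set0 by apply: cards0_eq.
  have h0 : (K <= minn #|RS| #|CS|)%N by lia.
  have h1 : (#|(set0 : {set V})| <= K)%N by rewrite cards0.
  have [M [MB mM _ MK]] := extend_matching (sub0set (board RS CS)) (matchingS (sub0set S) mS) h1 h0.
  have := Hv M MB mM MK; rewrite /Fsum (big_pred1 set0) ?S0 // => U /=.
  apply/idP/idP.
    by move=> /andP [_ /eqP /cards0_eq ->].
  by move=> /eqP ->; rewrite sub0set cards0.
have KB' : (K <= minn #|RS| #|CS|)%N by lia.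
have [M [MB mM SM MK]] := extend_matching SB mS (leq_trans (eq_leq Sd) dK) KB'.
have Hsw : forall (T : {set V}) t u, T \subset M -> #|T| = d.+1 -> t \in T -> u \in M -> u \notin T ->
       c T = c (u |: (T :\ t)).
  move=> T t u TM Td tT uM uT.
  have tM : t \in M := subsetP TM t tT.
  have tu : t != u by apply/eqP => E; move: uT; rewrite -E tT.
  have rtu : rw t != rw u by apply/eqP => E; move/eqP: tu; apply; apply: (matchingP mM) => //; left.
  have ctu : cl t != cl u by apply/eqP => E; move/eqP: tu; apply; apply: (matchingP mM) => //; right.
  have tB := subsetP MB t tM; have uB := subsetP MB u uM.
  move: tB uB; rewrite !inE => /andP [rtR ctC] /andP [ruR cuC].
  have [RS2 eRS2] : {RS2 : {set Rr} | RS2 = RS :\ rw t :\ rw u} by exists (RS :\ rw t :\ rw u).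
  have [CS2 eCS2] : {CS2 : {set Cc} | CS2 = CS :\ cl t :\ cl u} by exists (CS :\ cl t :\ cl u).
  have rut : (rw u != rw t) by rewrite eq_sym.
  have cut : (cl u != cl t) by rewrite eq_sym.
  have cR2 : #|RS2| = (#|RS| - 2)%N.
    have e1 := cardsD1 (rw t) RS; have e2 := cardsD1 (rw u) (RS :\ rw t).
    rewrite rtR /= in e1; rewrite !inE rut ruR /= in e2.
    by rewrite eRS2 e1 e2 !add1n !subSS subn0.
  have cC2 : #|CS2| = (#|CS| - 2)%N.
    have e1 := cardsD1 (cl t) CS; have e2 := cardsD1 (cl u) (CS :\ cl t).
    rewrite ctC /= in e1; rewrite !inE cut cuC /= in e2.
    by rewrite eCS2 e1 e2 !add1n !subSS subn0.
  pose c2 := fun X : {set V} => c (t |: X) - c (u |: X).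
  have key : forall N : {set V}, N \subset board RS2 CS2 -> matching N -> #|N| = K.-1 ->
      Fsum c2 N d = 0.
    move=> N NB mN NK.
    have gen : forall x, rw x \in RS -> cl x \in CS -> rw x \notin RS2 -> cl x \notin CS2 ->
        [/\ x \notin N, x |: N \subset board RS CS, matching (x |: N) & #|x |: N| = K].
      move=> x rxR cxC rx2 cx2.
      have xN : x \notin N.
        by apply/negP => /(subsetP NB); rewrite inE (negbTE rx2).
      split => //.
      - rewrite subUset sub1set inE rxR cxC /=; apply: (subset_trans NB).
        by apply/subsetP => y; rewrite !inE eRS2 eCS2 !inE => /andP [/andP [_ /andP [_ ->]] /andP [_ /andP [_ ->]]].
      - apply: matchingI => y z; rewrite !inE => /orP [/eqP->|yN] /orP [/eqP->|zN] //.
        + move=> E; have := subsetP NB z zN; rewrite inE => /andP [rz cz].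
          case: E => E; [move: rz rx2 | move: cz cx2]; rewrite -E => ->.
          by [].
          by [].
        + move=> E; have := subsetP NB y yN; rewrite inE => /andP [ry cy].
          case: E => E; [move: ry rx2 | move: cy cx2]; rewrite E => ->.
          by [].
          by [].
        + by apply: (matchingP mN).
      - rewrite cardsU1 xN NK /=; clear -dK; lia.
    have [tN tB2 tm tK] : [/\ t \notin N, t |: N \subset board RS CS, matching (t |: N) & #|t |: N| = K].
      by apply: gen => //; rewrite ?eRS2 ?eCS2 !inE eqxx ?andbF.
    have [uN uB2 um uK] : [/\ u \notin N, u |: N \subset board RS CS, matching (u |: N) & #|u |: N| = K].
      by apply: gen => //; rewrite ?eRS2 ?eCS2 !inE eqxx ?andbF.
    have e1 := Fsum_split c d tN; have e2 := Fsum_split c d uN.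
    rewrite (Hv _ tB2 tm tK) in e1; rewrite (Hv _ uB2 um uK) in e2.
    rewrite /Fsum /c2 sumrB.
    have -> : \sum_(X : {set V} | (X \subset N) && (#|X| == d)) c (t |: X) = - Fsum c N d.+1.
      by apply/eqP; rewrite -addr_eq0 addrC -e1.
    have -> : \sum_(X : {set V} | (X \subset N) && (#|X| == d)) c (u |: X) = - Fsum c N d.+1.
      by apply/eqP; rewrite -addr_eq0 addrC -e2.
    by rewrite subrr.
  have S2B : T :\ t \subset board RS2 CS2.
    apply/subsetP => y; rewrite !inE => /andP [yt yT]; rewrite eRS2 eCS2 !inE.
    have yM := subsetP TM y yT; have := subsetP MB y yM; rewrite inE => /andP [-> ->].
    have yu : y != u by apply/eqP => E; move: uT; rewrite -E yT.
    have r1 : rw y != rw t by apply/eqP => E; move/eqP: yt; apply; apply: (matchingP mM) => //; left.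
    have r2 : rw y != rw u by apply/eqP => E; move/eqP: yu; apply; apply: (matchingP mM) => //; left.
    have c1 : cl y != cl t by apply/eqP => E; move/eqP: yt; apply; apply: (matchingP mM) => //; right.
    have c2' : cl y != cl u by apply/eqP => E; move/eqP: yu; apply; apply: (matchingP mM) => //; right.
    by rewrite r1 r2 c1 c2'.
  have i1 : (d <= K.-1)%N by clear -dK; lia.
  have i2 : (K.-1 + d <= minn #|RS2| #|CS2|)%N by rewrite cR2 cC2; clear -KB dK; lia.
  have i3 : #|T :\ t| = d by move: Td; rewrite (cardsD1 t T) tT /=; clear; lia.
  have := IH RS2 CS2 K.-1 c2 i1 i2 key (T :\ t) S2B
    (matchingS (subset_trans (subD1set T t) TM) mM) i3.
  by rewrite /c2 (setD1K tT) => /eqP; rewrite subr_eq0 => /eqP.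
have Hall := johnson Hsw.
have := Hv M MB mM MK; rewrite /Fsum.
rewrite (eq_bigr (fun _ => c S)); last first.
  by move=> T /andP [TM /eqP Td]; apply: Hall.
rewrite sumr_const.
have -> : #|[pred T : {set V} | (T \subset M) && (#|T| == d.+1)]| = 'C(K, d.+1).
  by rewrite -MK -cards_draws; apply: eq_card => T; rewrite !inE.
have : (0 < 'C(K, d.+1))%N by rewrite bin_gt0.
case: ('C(K, d.+1)) => // k _ /eqP; rewrite -mulr_natr mulf_eq0 (negbTE (Hch k)) orbF.
by move/eqP.
Qed.
End Rook.

Lemma CCch (k : nat) : (k.+1)%:R != 0 :> CC.
Proof. by rewrite pnatr_eq0. Qed.

Lemma msize_leP (k : nat) (p : {mpoly CC[k]}) (b : nat) :
  reflect (forall mu, mu \in msupp p -> (mdeg mu < b)%N) (msize p <= b)%N.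
Proof.
rewrite msizeE; apply: (iffP (bigmax_leqP_seq _ _ _ _)) => H mu muP; first exact: H.
by move=> _; apply: H.
Qed.

Section Main.
Variables n m : nat.
Local Notation N := (nvar n m).
Local Notation PP := (Defs.Poly n m).

Definition rwN (i : 'I_N) : 'I_n := (enum_val i).1.
Definition clN (i : 'I_N) : 'I_m := (enum_val i).2.
Definition mkN (a : 'I_n) (b : 'I_m) : 'I_N := enum_rank (a, b).
Lemma rwN_mk a b : rwN (mkN a b) = a. Proof. by rewrite /rwN /mkN enum_rankK. Qed.
Lemma clN_mk a b : clN (mkN a b) = b. Proof. by rewrite /clN /mkN enum_rankK. Qed.
Lemma mkN_rc i : mkN (rwN i) (clN i) = i.
Proof. by rewrite /mkN /rwN /clN -surjective_pairing enum_valK. Qed.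

Local Notation matchingN := (matching rwN clN).

Definition mS (U : {set 'I_N}) : 'X_{1..N} := [multinom ((i \in U) : nat) | i < N].
Definition msup (mu : 'X_{1..N}) : {set 'I_N} := [set i | mu i != 0%N].

Lemma mSE U i : mS U i = (i \in U). Proof. by rewrite /mS mnmE. Qed.
Lemma msup_mS U : msup (mS U) = U.
Proof. by apply/setP => i; rewrite inE mSE; case: (i \in U). Qed.
Lemma mdeg_mS U : mdeg (mS U) = #|U|.
Proof.
rewrite mdegE -sum1_card [RHS]big_mkcond /=; apply: eq_bigr => i _.
by rewrite mSE; case: (i \in U).
Qed.
Lemma card_msup mu : (#|msup mu| <= mdeg mu)%N.
Proof.
rewrite mdegE -sum1_card big_mkcond /=; apply: leq_sum => i _.
by rewrite inE; case: (mu i).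
Qed.
Lemma sum_mem_card (A : {set 'I_N}) : (\sum_j ((j \in A) : nat))%N = #|A|.
Proof. by rewrite -sum1_card [RHS]big_mkcond; apply: eq_bigr => j _; case: (j \in A). Qed.

Lemma mS_msup mu : (mdeg mu <= #|msup mu|)%N -> mu = mS (msup mu).
Proof.
move=> H; apply/mnmP => i; rewrite mSE.
have le : forall j, (((j \in msup mu) : nat) <= mu j)%N by move=> j; rewrite inE; case: (mu j).
apply/eqP; rewrite eqn_leq le andbT; rewrite leqNgt; apply/negP => lt.
move: H; rewrite mdegE -sum_mem_card (bigD1 i) //= [X in (_ <= X)%N](bigD1 i) //=.
have : (\sum_(j | j != i) ((j \in msup mu) : nat) <= \sum_(j | j != i) mu j)%N.
  by apply: leq_sum => j _; exact: le.
move: lt; set a := mu i; set b := ((i \in msup mu) : nat).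
set x := (\sum_(j | _) mu j)%N; set y := (\sum_(j | _) _)%N.
by clear; lia.
Qed.

Definition supM (M : 'M[CC]_(n, m)) : {set 'I_N} := [set i | M (rwN i) (clN i) == 1].
Definition zo (M : 'M[CC]_(n, m)) := forall a b, M a b = 0 \/ M a b = 1.

Lemma evalX01 M mu : zo M -> evalM M 'X_[mu] = ((msup mu \subset supM M) : nat)%:R.
Proof.
move=> zM; rewrite /evalM mevalX.
case: (boolP (msup mu \subset supM M)) => H.
  apply: big1 => i _; case: (boolP (mu i == 0%N)) => [/eqP -> //|nz].
  have : i \in supM M by apply: (subsetP H); rewrite inE.
  by rewrite inE => /eqP; rewrite /rwN /clN => ->; rewrite expr1n.
have [i iS niM] := subsetPn H.
rewrite (bigD1 i) //=; move: iS niM; rewrite !inE /rwN /clN => nz.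
case: (zM (enum_val i).1 (enum_val i).2) => -> ; last by rewrite eqxx.
by move=> _; rewrite expr0n (negbTE nz) mul0r.
Qed.

Definition cU (p : PP) (U : {set 'I_N}) : CC := \sum_(mu <- msupp p | msup mu == U) p@_mu.

Lemma evalM_cU M p : zo M -> evalM M p = \sum_(U : {set 'I_N} | U \subset supM M) cU p U.
Proof.
move=> zM; rewrite {1}[p]mpolyE.
have E := fun mu => evalX01 mu zM; rewrite /evalM in E.
rewrite /evalM raddf_sum /=.
under eq_bigr => mu _ do rewrite mevalZ E.
rewrite /cU; under [RHS]eq_bigr => U _ do rewrite big_mkcond /=.
rewrite (exchange_big _ _ (msupp p)) /=; apply: eq_bigr => mu _.
rewrite -big_mkcondr /=.
case: (boolP (msup mu \subset supM M)) => H.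
  rewrite (big_pred1 (msup mu)) /= ?mulr1 // => U.
  by rewrite /= eq_sym; case: (boolP (U == msup mu)) => [/eqP ->|]; rewrite ?H ?andbF.
rewrite big_pred0 ?mulr0 // => U; apply/negP => /andP [US /eqP E2].
by move: H; rewrite E2 US.
Qed.

Lemma mcoeff_sum_eq (p : PP) mu0 : \sum_(mu <- msupp p | mu == mu0) p@_mu = p@_mu0.
Proof.
have -> : p@_mu0 = (\sum_(mu <- msupp p) p@_mu *: 'X_[mu])@_mu0 by rewrite -mpolyE.
rewrite raddf_sum /= big_mkcond /=; apply: eq_bigr => mu _.
by rewrite mcoeffZ mcoeffX; case: (mu == mu0); rewrite ?mulr1 ?mulr0.
Qed.

Definition matS (S : {set 'I_N}) : 'M[CC]_(n, m) := \matrix_(a, b) ((mkN a b \in S) : nat)%:R.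

Lemma zo_matS S : zo (matS S).
Proof. by move=> a b; rewrite mxE; case: (mkN a b \in S); [right|left]. Qed.

Lemma supM_matS S : supM (matS S) = S.
Proof.
apply/setP => i; rewrite inE mxE mkN_rc.
by case: (i \in S); rewrite ?eqxx // eq_sym oner_eq0.
Qed.

Lemma matchingN_eq (S : {set 'I_N}) :
  matchingN S -> forall i j, i \in S -> j \in S -> (rwN i = rwN j \/ clN i = clN j) -> i = j.
Proof. by move/matchingP. Qed.

Lemma Zrook_matS k S : matchingN S -> #|S| = k -> Zrook k (matS S).
Proof.
move=> mS Sk; split.
- exact: zo_matS.
- have -> : [set ij : 'I_n * 'I_m | matS S ij.1 ij.2 == 1] = [set enum_val i | i in S].
    apply/setP => ij; rewrite inE mxE; apply/idP/imsetP.
      case: (boolP (mkN ij.1 ij.2 \in S)) => h; last by rewrite eq_sym oner_eq0.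
      by move=> _; exists (mkN ij.1 ij.2) => //; rewrite /mkN enum_rankK -surjective_pairing.
    by case=> i iS ->; rewrite /mkN -surjective_pairing enum_valK iS eqxx.
  by rewrite card_imset; [exact: Sk | exact: enum_val_inj].
- move=> a; apply/card_le1_eqP => b b'; rewrite !inE !mxE.
  case: (boolP (mkN a b \in S)) => [h1|]; rewrite ?eqxx; last by rewrite eq_sym oner_eq0.
  case: (boolP (mkN a b' \in S)) => [h2|]; rewrite ?eqxx; last by rewrite eq_sym oner_eq0.
  move=> _ _; have := matchingN_eq mS h1 h2; rewrite !rwN_mk !clN_mk => /(_ (or_introl erefl)).
  by move/(congr1 clN); rewrite !clN_mk.
- move=> b; apply/card_le1_eqP => a a'; rewrite !inE !mxE.
  case: (boolP (mkN a b \in S)) => [h1|]; rewrite ?eqxx; last by rewrite eq_sym oner_eq0.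
  case: (boolP (mkN a' b \in S)) => [h2|]; rewrite ?eqxx; last by rewrite eq_sym oner_eq0.
  move=> _ _; have := matchingN_eq mS h1 h2; rewrite !rwN_mk !clN_mk => /(_ (or_intror erefl)).
  by move/(congr1 rwN); rewrite !rwN_mk.
Qed.


Lemma rc_inj (i j : 'I_N) : rwN i = rwN j -> clN i = clN j -> i = j.
Proof. by move=> E1 E2; rewrite -(mkN_rc i) -(mkN_rc j) E1 E2. Qed.

Lemma Zrook_sup k M : Zrook k M -> [/\ zo M, matchingN (supM M) & #|supM M| = k].
Proof.
case=> zM cardk rows cols; split => //.
- apply: matchingI => i j; rewrite !inE => /eqP hi /eqP hj [E|E].
  + apply: rc_inj => //; have /card_le1_eqP := rows (rwN i); apply; rewrite inE ?hi //.
    by rewrite E hj.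
  + apply: rc_inj => //; have /card_le1_eqP := cols (clN i); apply; rewrite inE ?hi //.
    by rewrite E hj.
- rewrite -cardk.
  have -> : [set ij : 'I_n * 'I_m | M ij.1 ij.2 == 1] = [set enum_val i | i in supM M].
    apply/setP => ij; rewrite inE; apply/idP/imsetP.
      by move=> h; exists (mkN ij.1 ij.2); rewrite ?inE ?rwN_mk ?clN_mk // /mkN enum_rankK -surjective_pairing.
    by case=> i; rewrite inE => h ->.
  by rewrite card_imset //; exact: enum_val_inj.
Qed.


Lemma coef_high (f g : PP) d mu : f \is d.-homog -> (msize (g - f) <= d)%N ->
  (d < mdeg mu)%N -> g@_mu = 0.
Proof.
move=> fh gf dmu.
have -> : g@_mu = f@_mu + (g - f)@_mu by rewrite mcoeffB addrC subrK.
rewrite (dhomog_nemf_coeff fh); last by rewrite neq_ltn dmu orbT.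
by rewrite add0r memN_msupp_eq0 // msize_mdeg_ge // (leq_trans gf) // ltnW.
Qed.

Lemma coef_eq (f g : PP) d mu : (msize (g - f) <= d)%N -> (d <= mdeg mu)%N -> g@_mu = f@_mu.
Proof.
move=> gf dmu.
have -> : g@_mu = f@_mu + (g - f)@_mu by rewrite mcoeffB addrC subrK.
by rewrite [X in _ + X]memN_msupp_eq0 ?addr0 // msize_mdeg_ge // (leq_trans gf).
Qed.

Lemma cU_high (f g : PP) d (U : {set 'I_N}) : f \is d.-homog -> (msize (g - f) <= d)%N ->
  (d < #|U|)%N -> cU g U = 0.
Proof.
move=> fh gf dU; rewrite /cU big1_seq // => mu /andP [/eqP sU _].
by apply: (coef_high fh gf); rewrite (leq_trans dU) // -sU card_msup.
Qed.

Lemma cU_eqd (f g : PP) d (U : {set 'I_N}) : f \is d.-homog -> (msize (g - f) <= d)%N ->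
  #|U| = d -> cU g U = f@_(mS U).
Proof.
move=> fh gf Ud; rewrite /cU.
transitivity (\sum_(mu <- msupp g | mu == mS U) g@_mu); last first.
  by rewrite mcoeff_sum_eq (coef_eq gf) // mdeg_mS Ud.
rewrite big_seq_cond [RHS]big_seq_cond; apply: eq_bigl => mu.
case: (boolP (mu \in msupp g)) => //= H.
apply/idP/idP => [/eqP E|/eqP ->]; last by rewrite msup_mS.
have : (mdeg mu <= d)%N.
  rewrite leqNgt; apply/negP => lt; move: H; rewrite mcoeff_msupp (coef_high fh gf lt).
  by rewrite eqxx.
by rewrite -Ud -E => /mS_msup <-.
Qed.

Lemma board_TT (S : {set 'I_N}) : S \subset board rwN clN setT setT.
Proof. by apply/subsetP => x _; rewrite !inE. Qed.

Lemma LtoQ k d (f g : PP) : f \is d.-homog -> (d <= k)%N -> (k + d <= minn n m)%N ->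
  vanishing (Zrook k) g -> (msize (g - f) <= d)%N ->
  exists gam : {set 'I_N} -> CC, forall S, matchingN S -> #|S| = d ->
    f@_(mS S) = \sum_(U : {set 'I_N} | (U \subset S) && (#|U| < d)%N) gam U.
Proof.
move=> fh dk kd van gf.
pose b (U : {set 'I_N}) := ('C(k - #|U|, d - #|U|))%:R : CC.
have bnz : forall U : {set 'I_N}, (#|U| <= d)%N -> b U != 0.
  move=> U Ud; rewrite /b; have : (0 < 'C(k - #|U|, d - #|U|))%N.
    by rewrite bin_gt0; clear -dk Ud; lia.
  by case: ('C(_, _)) => // c _; apply: CCch.
pose ct (S : {set 'I_N}) := \sum_(U : {set 'I_N} | (U \subset S) && (#|U| <= d)%N) cU g U / b U.
have van' : forall M : {set 'I_N}, M \subset board rwN clN setT setT -> matchingN M -> #|M| = k ->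
    Fsum ct M d = 0.
  move=> M _ mM Mk; rewrite /Fsum /ct (double_count M d (fun U : {set 'I_N} => (#|U| <= d)%N)
     (fun U => cU g U / b U)) Mk.
  transitivity (\sum_(U : {set 'I_N} | U \subset M) cU g U).
    rewrite [RHS](bigID (fun U : {set 'I_N} => (#|U| <= d)%N)) /=.
    rewrite [X in _ = _ + X]big1 ?addr0; last first.
      by move=> U /andP [_]; rewrite -ltnNge => lt; apply: (cU_high fh gf).
    apply: eq_big => U; first by rewrite -andbA andbb.
    move=> /andP [_ Ud]; rewrite -mulr_natr divfK //; exact: bnz.
  have := van (matS M) (Zrook_matS mM Mk); rewrite (evalM_cU _ (zo_matS M)) supM_matS.
  by [].
have KB : (k + d <= minn #|[set: 'I_n]| #|[set: 'I_m]|)%N.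
  by rewrite !cardsT !card_ord.
have ct0 := rank_lemma CCch rwN_mk clN_mk dk KB van'.
exists (fun U => - (cU g U / b U)) => S mS Sd.
have := ct0 S (board_TT S) mS Sd; rewrite /ct (bigD1 S) /=; last by rewrite subxx Sd leqnn.
rewrite /b Sd subnn bin0 divr1 (cU_eqd fh gf Sd) sumrN => /eqP; rewrite addr_eq0 => /eqP ->.
congr (- _); apply: eq_bigl => U.
case: (boolP (U \subset S)) => //= US.
case: (boolP (U == S)) => [/eqP ->|nUS]; first by rewrite Sd ltnn leqnn.
rewrite andbT; have : (#|U| < #|S|)%N by apply: proper_card; rewrite properEneq nUS US.
by rewrite Sd => lt; rewrite lt (ltnW lt).
Qed.


Lemma QtoL k d (f : PP) (gam : {set 'I_N} -> CC) : f \is d.-homog -> (d <= k)%N ->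
  (forall S, matchingN S -> #|S| = d ->
    f@_(mS S) = \sum_(U : {set 'I_N} | (U \subset S) && (#|U| < d)%N) gam U) ->
  exists g, vanishing (Zrook k) g /\ (msize (g - f) <= d)%N.
Proof.
move=> fh dk HQ.
pose bb (U : {set 'I_N}) := ('C(k - #|U|, d - #|U|))%:R : CC.
pose h := \sum_(U : {set 'I_N} | (#|U| < d)%N) (cU f U + gam U * bb U) *: 'X_[mS U].
have ff : (msize (f - f) <= d)%N by rewrite subrr msize0.
exists (f - h); split.
  move=> M /Zrook_sup [zM mM Mk].
  have E1 := evalM_cU f zM; have E2 := fun mu => evalX01 mu zM.
  rewrite /evalM in E1 E2.
  have E3 : meval (fun k => M (enum_val k).1 (enum_val k).2) h =
     \sum_(U : {set 'I_N} | (#|U| < d)%N && (U \subset supM M)) (cU f U + gam U * bb U).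
    rewrite /h [LHS]raddf_sum [RHS]big_mkcondr; apply: eq_bigr => U _.
    by rewrite /= mevalZ E2 msup_mS; case: (U \subset supM M); rewrite ?mulr1 ?mulr0.
  rewrite /evalM mevalB E1 E3.
  have -> : \sum_(U : {set 'I_N} | (#|U| < d)%N && (U \subset supM M)) (cU f U + gam U * bb U)
     = \sum_(U : {set 'I_N} | (U \subset supM M) && (#|U| < d)%N) cU f U +
       \sum_(U : {set 'I_N} | (U \subset supM M) && (#|U| < d)%N) gam U * bb U.
    by rewrite -big_split /=; apply: eq_bigl => U; rewrite andbC.
  rewrite [X in X - _](bigID (fun U : {set 'I_N} => (#|U| < d)%N)) /= opprD addrACA subrr add0r.
  apply/eqP; rewrite subr_eq0; apply/eqP.
  transitivity (\sum_(U : {set 'I_N} | (U \subset supM M) && (#|U| == d)) f@_(mS U)).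
    rewrite big_mkcond [RHS]big_mkcond; apply: eq_bigr => U _.
    case: (boolP (U \subset supM M)) => //= _.
    case: (ltngtP #|U| d) => //= H.
      by apply: (cU_high fh ff).
    by apply: (cU_eqd fh ff).
  transitivity (\sum_(U : {set 'I_N} | (U \subset supM M) && (#|U| == d))
      \sum_(V : {set 'I_N} | (V \subset U) && (#|V| < d)%N) gam V).
    apply: eq_bigr => U /andP [UM /eqP Ud]; apply: HQ => //.
    exact: matchingS UM mM.
  rewrite (double_count (supM M) d (fun V : {set 'I_N} => (#|V| < d)%N) gam) Mk.
  apply: eq_big => V; first by rewrite -andbA; case lt: (#|V| < d)%N; rewrite /= ?andbF // (ltnW lt) andbT.
  by rewrite mulr_natr.
rewrite addrAC subrr add0r msizeN.
rewrite /h; apply: leq_trans; first exact: msize_sum.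
apply/bigmax_leqP => U Ud.
apply: (leq_trans (msizeZ_le _ _)); by rewrite msizeX mdeg_mS.
Qed.


Lemma homog_msize_le (p : PP) j : p \is j.-homog -> (msize p <= j.+1)%N.
Proof. by move=> /dhomog_mf H; apply/msize_leP => mu /H ->. Qed.

Lemma msizeM_le2 (p q : PP) a b : (msize p <= a.+1)%N -> (msize q <= b)%N -> (msize (p * q) <= a + b)%N.
Proof.
have [->|pnz] := eqVneq p 0; first by rewrite mul0r msize0.
have [->|qnz] := eqVneq q 0; first by rewrite mulr0 msize0.
move=> hp hq; rewrite msizeM // -subn1 leq_subLR; apply: (leq_trans (leq_add hp hq)); by rewrite addSn add1n.
Qed.

Lemma pihomogM_homog (a t : PP) d e : t \is e.-homog ->
  pihomog mdeg d (a * t) = (if (e <= d)%N then pihomog mdeg (d - e) a else 0) * t.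
Proof.
move=> th; pose K := maxn (msize a) d.+1.
rewrite {1}(@pihomog_partitionE _ _ mdeg K a (leq_maxl _ _)) big_distrl raddf_sum /=.
have E : forall j : 'I_K, pihomog mdeg d (pihomog mdeg j a * t) =
    if (j + e == d)%N then pihomog mdeg j a * t else 0.
  move=> j; have hj := dhomogM (pihomogP mdeg j a) th.
  case: eqP => [<-|ne]; first exact: pihomog_dE.
  by apply: (pihomog_ne0 _ hj); apply/eqP => E; apply: ne.
under eq_bigr => j _ do rewrite E.
case: leqP => ed.
  have lt : (d - e < K)%N by rewrite /K; apply: (leq_trans _ (leq_maxr _ _)); rewrite ltnS leq_subr.
  rewrite (bigD1 (Ordinal lt)) //= subnK // eqxx big1 ?addr0 // => j ne.
  case: eqP => // E2; exfalso; move/negP: ne; apply; apply/eqP/val_inj => /=.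
  by move: E2; clear; lia.
by rewrite mul0r big1 // => j _; case: eqP => // E2; move: ed; rewrite -E2; clear; lia.
Qed.

Lemma vanishing0 Z : vanishing Z (0 : PP).
Proof. by move=> M _; rewrite /evalM meval0. Qed.

Lemma vanishingD Z (p q : PP) : vanishing Z p -> vanishing Z q -> vanishing Z (p + q).
Proof. by move=> hp hq M ZM; rewrite /evalM mevalD; move: (hp M ZM) (hq M ZM); rewrite /evalM => -> ->; rewrite addr0. Qed.

Lemma vanishingMl Z (b p : PP) : vanishing Z p -> vanishing Z (b * p).
Proof. by move=> hp M ZM; rewrite /evalM mevalM; move: (hp M ZM); rewrite /evalM => ->; rewrite mulr0. Qed.

Lemma topcomp_low (g : PP) : g != 0 -> (msize (g - topcomp g) <= (msize g).-1)%N.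
Proof.
move=> gnz; have sg : (0 < msize g)%N by rewrite lt0n msize_poly_eq0.
have [k Ek] : exists k, msize g = k.+1 by exists (msize g).-1; rewrite prednK.
rewrite /topcomp -/(pihomog mdeg (msize g).-1 g) Ek /=.
have P := @pihomog_partitionE _ _ mdeg k.+1 g (eq_leq Ek).
rewrite {1}P big_ord_recr /= addrK.
apply: leq_trans; first exact: msize_sum.
apply/bigmax_leqP => j _; exact: leq_trans (homog_msize_le (pihomogP mdeg j g)) (ltn_ord j).
Qed.

Lemma grI_L_gen Z d (s : seq (PP * PP)) :
  (forall q, q \in s -> exists g : PP, [/\ g != 0, vanishing Z g & q.2 = topcomp g]) ->
  exists G, vanishing Z G /\ (msize (G - pihomog mdeg d (\sum_(q <- s) q.1 * q.2)) <= d)%N.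
Proof.
elim: s => [|q s IH] H.
  by exists 0; split; [exact: vanishing0 | rewrite big_nil pihomog0 subrr msize0].
have [G [vG hG]] : exists G, vanishing Z G /\ (msize (G - pihomog mdeg d (\sum_(j <- s) j.1 * j.2)) <= d)%N.
  by apply: IH => q' h; apply: H; rewrite inE h orbT.
have [g [gnz vg qg]] := H q (mem_head _ _).
pose e := (msize g).-1.
have th : topcomp g \is e.-homog by apply: pihomogP.
have [b Eb] : {b : PP | b = if (e <= d)%N then pihomog mdeg (d - e) q.1 else 0} by eexists.
exists (b * g + G); split; first by apply: vanishingD => //; apply: vanishingMl.
rewrite big_cons pihomogD qg (pihomogM_homog _ _ th) -Eb.
have -> : b * g + G - (b * topcomp g + pihomog mdeg d (\sum_(j <- s) j.1 * j.2)) =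
   b * (g - topcomp g) + (G - pihomog mdeg d (\sum_(j <- s) j.1 * j.2)).
  by rewrite mulrBr opprD addrACA.
apply: leq_trans; first exact: msizeD_le.
rewrite geq_max hG andbT.
rewrite Eb; case: (leqP e d) => ed; last by rewrite mul0r msize0.
have := msizeM_le2 (homog_msize_le (pihomogP mdeg (d - e) q.1)) (topcomp_low gnz).
by rewrite -/e subnK.
Qed.

Lemma grI_L Z d (f : PP) : f \is d.-homog -> grI Z f ->
  exists g, vanishing Z g /\ (msize (g - f) <= d)%N.
Proof.
move=> fh [s [Hs Ef]]; have [G [vG hG]] := grI_L_gen d Hs.
by exists G; split => //; rewrite -Ef (pihomog_dE fh) in hG.
Qed.

Lemma L_grI Z d (f : PP) : f \is d.-homog ->
  (exists g, vanishing Z g /\ (msize (g - f) <= d)%N) -> grI Z f.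
Proof.
move=> fh [g [vg gf]].
have [->|fnz] := eqVneq f 0.
  by exists [::]; split; [move=> q; rewrite in_nil | rewrite big_nil].
have muf := mlead_supp fnz; set mu := mlead f in muf.
have dmu : mdeg mu = d by apply: (dhomog_mf fh).
have gmu : g@_mu = f@_mu by apply: (coef_eq gf); rewrite dmu.
have mug : mu \in msupp g by rewrite mcoeff_msupp gmu -mcoeff_msupp.
have gnz : g != 0 by apply/eqP => g0; move: mug; rewrite g0 msupp0.
have sg : msize g = d.+1.
  apply/eqP; rewrite eqn_leq; apply/andP; split; last by rewrite -dmu; apply: msize_mdeg_lt.
  have -> : g = (g - f) + f by rewrite subrK.
  apply: leq_trans; first exact: msizeD_le.
  by rewrite geq_max (homog_msize_le fh) (leq_trans gf).
have tg : topcomp g = f.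
  rewrite /topcomp -/(pihomog mdeg (msize g).-1 g) sg /=.
  have -> : g = (g - f) + f by rewrite subrK.
  rewrite pihomogD (pihomog_dE fh) pihomogE big_seq_cond big_pred0 ?add0r // => mu'.
  case: (boolP (mu' \in msupp (g - f))) => //= H; apply/negP => /eqP E.
  have h1 := msize_mdeg_lt H; rewrite E in h1; have := leq_trans h1 gf; by rewrite ltnn.
exists [:: (1, f)]; split; last by rewrite big_seq1 mul1r.
by move=> q; rewrite inE => /eqP -> /=; exists g; split.
Qed.

End Main.

Lemma grI0 n m (Z : 'M[CC]_(n, m) -> Prop) : grI Z 0.
Proof. by exists [::]; split; [move=> q; rewrite in_nil | rewrite big_nil]. Qed.

Lemma key_equiv n m r d (f : Defs.Poly n m) : f \is d.-homog -> (d <= r)%N ->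
  (r.+1 + d <= minn n m)%N -> (grI (@Zrook n m r) f <-> grI (@Zrook n m r.+1) f).
Proof.
move=> fh dr hmn.
have h1 : (r + d <= minn n m)%N by move: hmn; clear; lia.
have dr1 : (d <= r.+1)%N by move: dr; clear; lia.
split => H.
  have [g [vg gf]] := grI_L fh H.
  have [gam Hg] := LtoQ fh dr h1 vg gf.
  by apply: (L_grI fh); exact: QtoL fh dr1 Hg.
have [g [vg gf]] := grI_L fh H.
have [gam Hg] := LtoQ fh dr1 hmn vg gf.
by apply: (L_grI fh); exact: QtoL fh dr Hg.
Qed.

Theorem mainTheorem18 (n m r d : nat) :
  (d <= r)%N -> (r < minn m n)%N -> (d <= minn m n - r - 1)%N ->
  @Rdeg_iso n m d (@Zrook n m r) (@Zrook n m r.+1).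
Proof.
move=> dr rmn dmn.
have hmn : (r.+1 + d <= minn n m)%N by rewrite minnC; move: rmn dmn; clear; lia.
exists (fun p => p); split.
- by [].
- move=> a b ha hb; apply: (key_equiv (d := d)) => //; apply: dhomogD => //; by rewrite dhomogN.
- by move=> c a b _ _; rewrite /= subrr; apply: grI0.
- by move=> g a _; rewrite /= subrr; apply: grI0.
- by move=> c hc; exists c => //; rewrite /= subrr; apply: grI0.
Qed.
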